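(* Let $n \ge 1$ and $1 \le k \le n$ be integers, and let $D_n^{2\times k}$ be the graph obtained from two disjoint copies $K_{n,1}$ and $K_{n,2}$ of the complete graph $K_n$ by adding $k$ distinct edges $e_1,\dots,e_k$, each of the form $e_i=(v_{i,1},v_{i,2})$ with $v_{i,1}$ a vertex of $K_{n,1}$ and $v_{i,2}$ a vertex of $K_{n,2}$. Then $D_n^{2\times k}$ has $2n$ vertices and $$\frac{2}{3(2n-1)} \le \lambda_2(D_n^{2\times k}) \le \frac{2k}{n}.$$
   Context: All graphs are finite, simple and unweighted. For a graph $G$ with adjacency matrix $A$ and diagonal degree matrix $D$, the graph Laplacian is $L_G = D - A$, with eigenvalues ordered $0=\lambda_1 \le \lambda_2 \le \dots$; $\lambda_2(G)$ denotes the second smallest eigenvalue of $L_G$. *)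

(* Defs.v *)
From HB Require Import structures.
From mathcomp Require Import all_boot all_order all_algebra.
From mathcomp Require Import reals.
Set Implicit Arguments. Unset Strict Implicit. Unset Printing Implicit Defensive.
Import Order.TTheory GRing.Theory Num.Theory.
Local Open Scope ring_scope.

(* Vertices of D_n^{2 x k}: 'I_(n + n); the first copy K_{n,1} is the image
   of lshift, the second copy K_{n,2} the image of rshift.
   The k added edges are given by an injective map
   f : 'I_k -> 'I_n * 'I_n, edge e_i joining (lshift (f i).1) and
   (rshift (f i).2). *)
Definition Dadj (n k : nat) (f : 'I_k -> 'I_n * 'I_n) : rel 'I_(n + n) :=
  fun u v =>
    match fintype.split u, fintype.split v with
    | inl a, inl b => a != b
    | inr a, inr b => a != b
    | inl a, inr b => (a, b) \in codom f
    | inr a, inl b => (b, a) \in codom f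
    end.

Definition adjmx (R : nzRingType) (m : nat) (e : rel 'I_m) : 'M[R]_m :=
  \matrix_(i, j) (e i j)%:R.

Definition degmx (R : nzRingType) (m : nat) (e : rel 'I_m) : 'M[R]_m :=
  \matrix_(i, j) ((i == j)%:R * (#|[pred x | e i x]|)%:R).

Definition laplacian (R : nzRingType) (m : nat) (e : rel 'I_m) : 'M[R]_m :=
  degmx R e - adjmx R e.

(* s is the list of all eigenvalues (with algebraic multiplicity) of A,
   in nondecreasing order: lambda_1 = s`_0 <= lambda_2 = s`_1 <= ... *)
Definition sorted_eigenvalues (R : realType) (m : nat) (A : 'M[R]_m)
  (s : seq R) : Prop :=
  sorted <=%R s /\ char_poly A = \prod_(x <- s) ('X - x%:P).

(* Main.v *)
Require Import Defs.
From HB Require Import structures.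
From mathcomp Require Import all_boot all_order all_algebra.
From mathcomp Require Import reals.
From mathcomp Require Import complex.
From mathcomp.algebra_tactics Require Import ring lra.
Import Order.TTheory GRing.Theory Num.Theory.
Local Open Scope ring_scope.
From mathcomp Require Import sesquilinear spectral.
Lemma cs_sum (R : realType) (T : finType) (P : pred T) (t : T -> R) :
  (\sum_(i | P i) t i) ^+ 2 <= #|P|%:R * \sum_(i | P i) t i ^+ 2.
Proof.
have H0 : 0 <= \sum_(i | P i) \sum_(j | P j) (t i - t j) ^+ 2.
  by apply: sumr_ge0 => i _; apply: sumr_ge0 => j _; exact: sqr_ge0.
have cst : forall x : R, \sum_(j | P j) x = #|P|%:R * x.
  by move=> x; rewrite sumr_const mulr_natl.
have E : \sum_(i | P i) \sum_(j | P j) (t i - t j) ^+ 2 =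
   (#|P|%:R * \sum_(i | P i) t i ^+ 2 - (\sum_(i | P i) t i) ^+ 2) *+ 2.
  have e1 : forall i j, (t i - t j) ^+ 2 = t i ^+ 2 + (t j ^+ 2 - 2 * (t i * t j)).
    by move=> i j; ring.
  under eq_bigr => i _ do under eq_bigr => j _ do rewrite e1.
  under eq_bigr => i _ do rewrite big_split /= cst sumrB -mulr_sumr -mulr_sumr.
  rewrite big_split /= sumrB -mulr_sumr cst -mulr_sumr -mulr_suml.
  rewrite expr2; ring.
lra.
Qed.

Lemma dev_bound (R : realType) (n : nat) (y : 'I_n -> R) (a : 'I_n) :
  (n%:R * y a - \sum_i y i) ^+ 2 <=
  (n%:R - 1) * (n%:R * \sum_i y i ^+ 2 - (\sum_i y i) ^+ 2).
Proof.
have cs := @cs_sum R _ (predC1 a) y.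
have hc : #|predC1 a| = n.-1 by rewrite cardC1 card_ord.
rewrite hc in cs.
have n0 : (0 < n)%N by apply: leq_ltn_trans (ltn_ord a).
have hn : (n.-1)%:R = n%:R - 1 :> R by rewrite -(prednK n0) mulrSr addrK.
rewrite hn in cs.
rewrite [\sum_i y i](bigD1 a) //= [\sum_i y i ^+ 2](bigD1 a) //=.
set r := \sum_(i | i != a) y i in cs *.
set R2 := \sum_(i | i != a) y i ^+ 2 in cs *.
have N1 : 0 <= n%:R - 1 :> R by rewrite subr_ge0 ler1n.
have h : 0 <= (n%:R - 1 + 1) * ((n%:R - 1) * R2 - r ^+ 2) :> R.
  by apply: mulr_ge0; lra.
rewrite -subr_ge0; apply: (le_trans h); rewrite le_eqVlt; apply/orP; left; apply/eqP; ring.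
Qed.

Lemma final_ineq (R : realType) (n Y2 Z2 m ya zb : R) : 1 <= n ->
  0 <= n * Y2 - m ^+ 2 -> 0 <= n * Z2 - m ^+ 2 ->
  (n * ya - m) ^+ 2 <= (n - 1) * (n * Y2 - m ^+ 2) ->
  (n * zb + m) ^+ 2 <= (n - 1) * (n * Z2 - m ^+ 2) ->
  2 / (3 * (2 * n - 1)) * (Y2 + Z2) <=
  (n * Y2 - m ^+ 2) + (n * Z2 - m ^+ 2) + (ya - zb) ^+ 2.
Proof.
move=> n1 hY hZ hd he.
set Y := n * Y2 - m ^+ 2 in hY hd *.
set Z := n * Z2 - m ^+ 2 in hZ he *.
set d := n * ya - m in hd.
set e := n * zb + m in he.
have n0 : 0 < n by lra.
have hg : (d - e) ^+ 2 <= 2 * (n - 1) * (Y + Z).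
  have : 0 <= (d + e) ^+ 2 by apply: sqr_ge0.
  lra.
have hsq : 4 / 3 * m ^+ 2 - (d - e) ^+ 2 / 2 <= (d - e + 2 * m) ^+ 2.
  have : 0 <= (d - e + 4 / 3 * m) ^+ 2 by apply: sqr_ge0.
  lra.
have hn2 : n ^+ 2 * (ya - zb) ^+ 2 = (d - e + 2 * m) ^+ 2.
  rewrite /d /e; ring.
have hK : 2 / (3 * (2 * n - 1)) * n <= 2 / 3.
  have p : 0 < 3 * (2 * n - 1) by lra.
  rewrite mulrAC ler_pdivrMr //; lra.
have hK0 : 0 <= 2 / (3 * (2 * n - 1)) * n.
  apply: mulr_ge0; last by lra.
  apply: divr_ge0; lra.
set K := 2 / (3 * (2 * n - 1)) in hK hK0 *.
have eL : n ^+ 2 * (K * (Y2 + Z2)) = K * n * (Y + Z + 2 * m ^+ 2) by rewrite /Y /Z; ring.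
have hW : 0 <= Y + Z by lra.
have h1 : K * n * (Y + Z + 2 * m ^+ 2) <= 2 / 3 * (Y + Z + 2 * m ^+ 2).
  apply: ler_wpM2r => //; have := sqr_ge0 m; lra.
have h2 : 1 <= n ^+ 2 - n + 1.
  have : 0 <= n * (n - 1) by apply: mulr_ge0; lra.
  rewrite expr2; lra.
have h3 : (Y + Z) <= (n ^+ 2 - n + 1) * (Y + Z).
  have := ler_wpM2r hW h2; lra.
have : n ^+ 2 * (K * (Y2 + Z2)) <= n ^+ 2 * (Y + Z + (ya - zb) ^+ 2).
  have e2 : n ^+ 2 * (Y + Z + (ya - zb) ^+ 2) = n ^+ 2 * (Y + Z) + (d - e + 2 * m) ^+ 2.
    by rewrite -hn2; ring.
  rewrite eL e2.
  have : (n ^+ 2 - n + 1) * (Y + Z) = n ^+ 2 * (Y + Z) - (n - 1) * (Y + Z) by ring.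
  lra.
rewrite ler_pM2l //; exact: exprn_gt0.
Qed.
Lemma qf_expand (R : realType) (m : nat) (A : 'M[R]_m) (z : 'rV[R]_m) :
  (z *m A *m z^T) 0 0 = \sum_u \sum_v z 0 u * A u v * z 0 v.
Proof.
rewrite mxE exchange_big /=; apply: eq_bigr => u _.
rewrite mxE mulr_suml; apply: eq_bigr => v _; rewrite !mxE.
by [].
Qed.

Lemma deg_sum (R : realType) (m : nat) (e : rel 'I_m) (u : 'I_m) :
  \sum_v (e u v)%:R = (#|[pred x | e u x]|)%:R :> R.
Proof.
rewrite -sumr_const [RHS]big_mkcond /=; apply: eq_bigr => v _.
by rewrite inE; case: (e u v).
Qed.

Lemma edge_form (R : realType) (m : nat) (e : rel 'I_m)
  (esym : forall u v, e u v = e v u) (z : 'rV[R]_m) :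
  (z *m laplacian R e *m z^T) 0 0 *+ 2 =
  \sum_u \sum_v (e u v)%:R * (z 0 u - z 0 v) ^+ 2.
Proof.
rewrite qf_expand.
have E1 : forall u, \sum_v z 0 u * laplacian R e u v * z 0 v =
   (#|[pred x | e u x]|)%:R * z 0 u ^+ 2 - \sum_v (e u v)%:R * (z 0 u * z 0 v).
  move=> u; rewrite /laplacian.
  under eq_bigr => v _ do rewrite !mxE.
  rewrite (bigD1 u) //= eqxx.
  under eq_bigr => v hv do rewrite eq_sym (negbTE hv) mul0r sub0r.
  rewrite [X in _ = _ - X](bigD1 u) //=.
  have -> : \sum_(v | v != u) z 0 u * (1 *- e u v) * z 0 v =
     - \sum_(v | v != u) (e u v)%:R * (z 0 u * z 0 v).
    by rewrite -sumrN; apply: eq_bigr => v _; ring.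
  ring.
have E2 : forall u, \sum_v (e u v)%:R * (z 0 u - z 0 v) ^+ 2 =
   (#|[pred x | e u x]|)%:R * z 0 u ^+ 2 + \sum_v (e u v)%:R * z 0 v ^+ 2
   - (\sum_v (e u v)%:R * (z 0 u * z 0 v)) *+ 2.
  move=> u; rewrite -deg_sum mulr_suml -sumrMnl -big_split -sumrB /=.
  by apply: eq_bigr => v _; ring.
under eq_bigr => u _ do rewrite E1.
under [RHS]eq_bigr => u _ do rewrite E2.
have E3 : \sum_u \sum_v (e u v)%:R * z 0 v ^+ 2 =
   \sum_u (#|[pred x | e u x]|)%:R * z 0 u ^+ 2 :> R.
  rewrite exchange_big /=; apply: eq_bigr => v _.
  rewrite -deg_sum mulr_suml; apply: eq_bigr => u _; by rewrite esym.
rewrite !big_split /= !sumrN sumrMnl E3.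
set a := \sum_u _. set b := \sum_u _.
ring.
Qed.



Lemma split_l n m (a : 'I_n) : fintype.split (lshift m a) = inl a.
Proof. exact: (unsplitK (inl a)). Qed.
Lemma split_r n m (a : 'I_m) : fintype.split (rshift n a) = inr a.
Proof. exact: (unsplitK (inr a)). Qed.

Lemma Dsym n k (f : 'I_k -> 'I_n * 'I_n) u v : Dadj f u v = Dadj f v u.
Proof.
rewrite /Dadj; case: (fintype.split u) => a; case: (fintype.split v) => b //;
by rewrite eq_sym.
Qed.

Lemma sumLR (R : realType) n (F : 'I_(n + n) -> R) :
  \sum_u F u = \sum_a F (lshift n a) + \sum_b F (rshift n b).
Proof. exact: big_split_ord. Qed.

Lemma sum_in (R : realType) (T : finType) (A : {pred T}) :
  \sum_p (p \in A)%:R = #|A|%:R :> R.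
Proof.
rewrite -sumr_const [RHS]big_mkcond /=; apply: eq_bigr => p _.
by case: (p \in A).
Qed.

Lemma count_codom (R : realType) n k (f : 'I_k -> 'I_n * 'I_n) : injective f ->
  \sum_a \sum_b ((a, b) \in codom f)%:R = k%:R :> R.
Proof.
move=> fi; rewrite pair_bigA /=.
have -> : \sum_p ((p.1, p.2) \in codom f)%:R = \sum_p (p \in codom f)%:R :> R.
  by apply: eq_bigr => -[a b].
by rewrite sum_in card_codom // card_ord.
Qed.

Lemma sum_sqdiff (R : realType) n (t : 'I_n -> R) :
  \sum_i \sum_j (t i - t j) ^+ 2 = (n%:R * \sum_i t i ^+ 2 - (\sum_i t i) ^+ 2) *+ 2.
Proof.
have cst : forall x : R, \sum_(j < n) x = n%:R * x.
  by move=> x; rewrite sumr_const card_ord mulr_natl.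
have e1 : forall i j, (t i - t j) ^+ 2 = t i ^+ 2 + (t j ^+ 2 - 2 * (t i * t j)).
  by move=> i j; ring.
under eq_bigr => i _ do under eq_bigr => j _ do rewrite e1.
under eq_bigr => i _ do rewrite big_split /= cst sumrB -mulr_sumr -mulr_sumr.
rewrite big_split /= sumrB -mulr_sumr cst -mulr_sumr -mulr_suml.
rewrite expr2; ring.
Qed.

Definition side (R : realType) {n} (u : 'I_(n + n)) : R :=
  match fintype.split u with inl _ => 1 | inr _ => -1 end.

Lemma blocks (R : realType) n (G : 'I_(n + n) -> 'I_(n + n) -> R) :
  \sum_u \sum_v G u v =
  \sum_a \sum_b G (lshift n a) (lshift n b) + \sum_a \sum_b G (lshift n a) (rshift n b)
  + (\sum_a \sum_b G (rshift n a) (lshift n b) + \sum_a \sum_b G (rshift n a) (rshift n b)).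
Proof.
rewrite sumLR; congr (_ + _); rewrite -big_split; apply: eq_bigr => a _; exact: sumLR.
Qed.

Lemma DLL n k (f : 'I_k -> 'I_n * 'I_n) a b : Dadj f (lshift n a) (lshift n b) = (a != b).
Proof. by rewrite /Dadj !split_l. Qed.
Lemma DLR n k (f : 'I_k -> 'I_n * 'I_n) a b : Dadj f (lshift n a) (rshift n b) = ((a, b) \in codom f).
Proof. by rewrite /Dadj split_l split_r. Qed.
Lemma DRL n k (f : 'I_k -> 'I_n * 'I_n) a b : Dadj f (rshift n a) (lshift n b) = ((b, a) \in codom f).
Proof. by rewrite /Dadj split_l split_r. Qed.
Lemma DRR n k (f : 'I_k -> 'I_n * 'I_n) a b : Dadj f (rshift n a) (rshift n b) = (a != b).
Proof. by rewrite /Dadj !split_r. Qed.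
Lemma side_l (R : realType) n (a : 'I_n) : side R (lshift n a) = 1.
Proof. by rewrite /side split_l. Qed.
Lemma side_r (R : realType) n (a : 'I_n) : side R (rshift n a) = -1.
Proof. by rewrite /side split_r. Qed.

Lemma qf_side (R : realType) n k (f : 'I_k -> 'I_n * 'I_n) : injective f ->
  let x := \row_(u < n + n) side R u in
  (x *m laplacian R (Dadj f) *m x^T) 0 0 = 4 * k%:R.
Proof.
move=> fi x.
have h := @edge_form R _ _ (@Dsym n k f) x.
have h2 : \sum_u \sum_v (Dadj f u v)%:R * (x 0 u - x 0 v) ^+ 2 = 8 * k%:R :> R.
  rewrite (@blocks R n (fun u v => (Dadj f u v)%:R * (x 0 u - x 0 v) ^+ 2)) /=.
  have e1 : \sum_a \sum_b (Dadj f (lshift n a) (lshift n b))%:R *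
     (x 0 (lshift n a) - x 0 (lshift n b)) ^+ 2 = 0 :> R.
    by apply: big1 => a _; apply: big1 => b _; rewrite !mxE !side_l subrr expr0n mulr0.
  have e4 : \sum_a \sum_b (Dadj f (rshift n a) (rshift n b))%:R *
     (x 0 (rshift n a) - x 0 (rshift n b)) ^+ 2 = 0 :> R.
    by apply: big1 => a _; apply: big1 => b _; rewrite !mxE !side_r subrr expr0n mulr0.
  have e2 : \sum_a \sum_b (Dadj f (lshift n a) (rshift n b))%:R *
     (x 0 (lshift n a) - x 0 (rshift n b)) ^+ 2 = 4 * k%:R :> R.
    rewrite -(@count_codom R _ _ _ fi) mulr_sumr; apply: eq_bigr => a _.
    rewrite mulr_sumr; apply: eq_bigr => b _.
    rewrite !mxE side_l side_r DLR; ring.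
  have e3 : \sum_a \sum_b (Dadj f (rshift n a) (lshift n b))%:R *
     (x 0 (rshift n a) - x 0 (lshift n b)) ^+ 2 = 4 * k%:R :> R.
    rewrite -(@count_codom R _ _ _ fi) exchange_big mulr_sumr; apply: eq_bigr => a _.
    rewrite mulr_sumr; apply: eq_bigr => b _.
    rewrite !mxE side_l side_r DRL; ring.
  rewrite e1 e2 e3 e4; ring.
rewrite h2 in h.
have : (x *m laplacian R (Dadj f) *m x^T) 0 0 * 2 = 4 * k%:R * 2.
  by rewrite -mulr_natr in h; rewrite h; ring.
by move/(mulIf (lt0r_neq0 _)) => -> //; rewrite ltr0n.
Qed.

Lemma span_vec (R : realType) n k (f : 'I_k -> 'I_n * 'I_n) : injective f ->
  forall (al be : R) (z : 'rV_(n + n)), (forall u, z 0 u = al + be * side R u) ->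
  (z *m laplacian R (Dadj f) *m z^T) 0 0 = be ^+ 2 * (4 * k%:R) /\
  \sum_u z 0 u ^+ 2 = 2 * n%:R * (al ^+ 2 + be ^+ 2).
Proof.
move=> fi al be z hz; split.
  pose x := \row_(u < n + n) side R u.
  have hx : (x *m laplacian R (Dadj f) *m x^T) 0 0 = 4 * k%:R by exact: qf_side.
  have h1 := @edge_form R _ _ (@Dsym n k f) z.
  have h2 := @edge_form R _ _ (@Dsym n k f) x.
  have e : \sum_u \sum_v (Dadj f u v)%:R * (z 0 u - z 0 v) ^+ 2 =
     be ^+ 2 * \sum_u \sum_v (Dadj f u v)%:R * (x 0 u - x 0 v) ^+ 2.
    rewrite mulr_sumr; apply: eq_bigr => u _; rewrite mulr_sumr; apply: eq_bigr => v _.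
    rewrite !hz !mxE; ring.
  rewrite -h1 -h2 hx !mulr2n mulrDr in e.
  set q := (z *m _ *m _) 0 0 in e *.
  set t := be ^+ 2 * (4 * k%:R) in e *.
  lra.
rewrite sumLR.
under eq_bigr => a _ do rewrite hz side_l.
under [X in _ + X]eq_bigr => a _ do rewrite hz side_r.
rewrite !sumr_const !card_ord; ring.
Qed.

Lemma lower_qf (R : realType) n k (f : 'I_k -> 'I_n * 'I_n) : (1 <= n)%N -> (1 <= k)%N ->
  forall z : 'rV[R]_(n + n), \sum_u z 0 u = 0 ->
  2 / (3 * (2 * n%:R - 1)) * \sum_u z 0 u ^+ 2 <= (z *m laplacian R (Dadj f) *m z^T) 0 0.
Proof.
move=> n1 k1 z hz.
have h1 := @edge_form R _ _ (@Dsym n k f) z.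
rewrite (@blocks R n (fun u v => (Dadj f u v)%:R * (z 0 u - z 0 v) ^+ 2)) /= in h1.
pose y : 'I_n -> R := fun a => z 0 (lshift n a).
pose w : 'I_n -> R := fun a => z 0 (rshift n a).
have e1 : \sum_a \sum_b (Dadj f (lshift n a) (lshift n b))%:R *
     (z 0 (lshift n a) - z 0 (lshift n b)) ^+ 2 = \sum_a \sum_b (y a - y b) ^+ 2.
  apply: eq_bigr => a _; apply: eq_bigr => b _; rewrite DLL.
  by case: eqP => [->|]; rewrite ?subrr ?expr0n ?mulr0 ?mul1r.
have e4 : \sum_a \sum_b (Dadj f (rshift n a) (rshift n b))%:R *
     (z 0 (rshift n a) - z 0 (rshift n b)) ^+ 2 = \sum_a \sum_b (w a - w b) ^+ 2.
  apply: eq_bigr => a _; apply: eq_bigr => b _; rewrite DRR.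
  by case: eqP => [->|]; rewrite ?subrr ?expr0n ?mulr0 ?mul1r.
have e3 : \sum_a \sum_b (Dadj f (rshift n a) (lshift n b))%:R *
     (z 0 (rshift n a) - z 0 (lshift n b)) ^+ 2 =
   \sum_a \sum_b (Dadj f (lshift n a) (rshift n b))%:R *
     (z 0 (lshift n a) - z 0 (rshift n b)) ^+ 2.
  rewrite exchange_big; apply: eq_bigr => a _; apply: eq_bigr => b _.
  rewrite DRL DLR; congr (_ * _); ring.
have i0 : 'I_k := Ordinal k1.
set a0 := (f i0).1. set b0 := (f i0).2.
have e2 : (y a0 - w b0) ^+ 2 <= \sum_a \sum_b (Dadj f (lshift n a) (rshift n b))%:R *
     (z 0 (lshift n a) - z 0 (rshift n b)) ^+ 2.
  rewrite pair_bigA /= (bigD1 (f i0)) //=.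
  rewrite DLR -surjective_pairing codom_f mul1r -/a0 -/b0.
  rewrite lerDl; apply: sumr_ge0 => p _; apply: mulr_ge0 => //; exact: sqr_ge0.
rewrite e1 e3 e4 !sum_sqdiff in h1.
rewrite sumLR in hz.
have hS : \sum_a w a = - \sum_a y a.
  have hz' : \sum_a y a + \sum_a w a = 0 := hz.
  lra.
rewrite hS sqrrN in h1.
rewrite sumLR.
have dy := @dev_bound R n y a0.
have dw := @dev_bound R n w b0.
rewrite hS sqrrN opprK in dw.
have Y0 : 0 <= n%:R * \sum_a y a ^+ 2 - (\sum_a y a) ^+ 2.
  have : 0 <= \sum_a \sum_b (y a - y b) ^+ 2.
    by apply: sumr_ge0 => a _; apply: sumr_ge0 => b _; exact: sqr_ge0.
  rewrite sum_sqdiff; rewrite pmulrn_lge0 //.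
have Z0 : 0 <= n%:R * \sum_a w a ^+ 2 - (\sum_a y a) ^+ 2.
  have : 0 <= \sum_a \sum_b (w a - w b) ^+ 2.
    by apply: sumr_ge0 => a _; apply: sumr_ge0 => b _; exact: sqr_ge0.
  rewrite sum_sqdiff hS sqrrN; rewrite pmulrn_lge0 //.
have n1' : 1 <= n%:R :> R by rewrite ler1n.
have F := @final_ineq R _ _ _ _ _ _ n1' Y0 Z0 dy dw.
have -> : \sum_a z 0 (lshift n a) ^+ 2 = \sum_a y a ^+ 2 by [].
have -> : \sum_a z 0 (rshift n a) ^+ 2 = \sum_a w a ^+ 2 by [].
set LR := \sum_a \sum_b _ in h1 e2.
set Y := n%:R * _ - _ in h1 F Y0.
set Z := n%:R * _ - _ in h1 F Z0.
set q := (z *m _ *m _) 0 0 in h1 *.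
rewrite !mulr2n in h1.
have G : Y + Z + (y a0 - w b0) ^+ 2 <= q by lra.
exact: (le_trans F G).
Qed.

Local Open Scope sesquilinear_scope.


Lemma conjCE (R : realType) (x : R[i]) : Num.conj x = (x^*)%C.
Proof. by []. Qed.

Lemma RC_real (R : realType) (x : R) : (x%:C)%C \is Num.real.
Proof. by apply/complex_realP; exists x. Qed.

Lemma real_spectral (R : realType) (m : nat) (L : 'M[R]_m) : L^T = L ->
  exists (P : 'M[R[i]]_m) (d : 'I_m -> R),
    P *m P^t* = 1%:M /\ P^t* *m P = 1%:M /\
    map_mx (real_complex R) L = P^t* *m diag_mx (\row_i ((d i)%:C)%C) *m P.
Proof.
move=> Ls.
set LC := map_mx (real_complex R) L.
have herm : LC \is hermsymmx.
  apply/is_hermitianmxP; rewrite expr0 scale1r.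
  apply/matrixP => i j; rewrite !mxE.
  rewrite conj_Creal ?RC_real //.
  by rewrite -[in LHS]Ls mxE.
have Pu := spectral_unitarymx LC.
exists (spectralmx LC), (fun i => complex.Re (spectral_diag LC 0 i)).
have P1 : spectralmx LC *m (spectralmx LC)^t* = 1%:M by apply/unitarymxP.
split => //; split.
  by have := mulmxKtV (1%:M) Pu (erefl _); rewrite mul1mx.
have := hermitian_spectral_diag_real herm => /mxOverP dreal.
have -> : \row_i ((complex.Re (spectral_diag LC 0 i))%:C)%C = spectral_diag LC.
  by apply/rowP => i; rewrite mxE RRe_real // ord1.
rewrite -invmx_unitary //.
by apply/orthomx_spectralP; apply: hermitian_normalmx.
Qed.

Lemma char_poly_sim (F : fieldType) m (Q D P : 'M[F]_m) : Q *m P = 1%:M ->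
  char_poly (Q *m D *m P) = char_poly D.
Proof.
move=> QP.
rewrite /char_poly /char_poly_mx.
have e : 'X%:M - map_mx polyC (Q *m D *m P) =
    map_mx polyC Q *m ('X%:M - map_mx polyC D) *m map_mx polyC P.
  rewrite !map_mxM mulmxBr mulmxBl mul_mx_scalar -scalemxAl.
  rewrite -[map_mx _ Q *m map_mx _ P]map_mxM QP.
  by rewrite map_mx1 scalemx1.
rewrite e !det_mulmx mulrAC -det_mulmx -map_mxM QP map_mx1 det1 mul1r.
by [].
Qed.

Lemma char_poly_real (R : realType) m (L : 'M[R]_m) (P : 'M[R[i]]_m) (d : 'I_m -> R) :
  P^t* *m P = 1%:M ->
  map_mx (real_complex R) L = P^t* *m diag_mx (\row_i ((d i)%:C)%C) *m P ->
  char_poly L = \prod_i ('X - (d i)%:P).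
Proof.
move=> PP LE.
apply: (@map_poly_inj _ _ (real_complex R)).
rewrite map_char_poly LE char_poly_sim // char_poly_trig ?diag_mx_is_trig //.
rewrite rmorph_prod; apply: eq_bigr => i _.
by rewrite rmorphB /= map_polyX map_polyC !mxE eqxx mulr1n.
Qed.


Lemma term_id (R : realType) (x y : R[i]) (l : R) :
  x * (l%:C)%C * (y^*)%C =
  ((l * (complex.Re x * complex.Re y + complex.Im x * complex.Im y))%:C)%C +
  'i%C * ((l * (complex.Im x * complex.Re y - complex.Re x * complex.Im y))%:C)%C.
Proof.
case: x => a b; case: y => c e; apply/eqP; rewrite eq_complex /=.
by apply/andP; split; apply/eqP; ring.
Qed.

Lemma norm_id (R : realType) (x : R[i]) :
  x * (x^*)%C = ((complex.Re x ^+ 2 + complex.Im x ^+ 2)%:C)%C.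
Proof.
case: x => a b; apply/eqP; rewrite eq_complex /=.
by apply/andP; split; apply/eqP; ring.
Qed.

Lemma cqf_expand (R : realType) m (A : 'M[R[i]]_m) (y : 'rV[R[i]]_m) :
  (y *m A *m y^t*) 0 0 = \sum_u \sum_v y 0 u * A u v * ((y 0 v)^*)%C.
Proof.
rewrite mxE exchange_big /=; apply: eq_bigr => u _.
rewrite mxE mulr_suml; apply: eq_bigr => v _; rewrite !mxE.
by [].
Qed.

Lemma Lsym_entry (R : realType) m (L : 'M[R]_m) : L^T = L -> forall u v, L v u = L u v.
Proof. by move=> Ls u v; rewrite -[in RHS]Ls mxE. Qed.

Lemma reduce (R : realType) m (L : 'M[R]_m) (Ls : L^T = L) (y : 'rV[R[i]]_m) :
  (y *m map_mx (real_complex R) L *m y^t*) 0 0 =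
  (((map_mx (@complex.Re R) y *m L *m (map_mx (@complex.Re R) y)^T) 0 0 +
    (map_mx (@complex.Im R) y *m L *m (map_mx (@complex.Im R) y)^T) 0 0)%:C)%C.
Proof.
rewrite cqf_expand !qf_expand.
under eq_bigr => u _ do under eq_bigr => v _ do rewrite mxE term_id.
under eq_bigr => u _ do rewrite big_split /= -mulr_sumr.
rewrite big_split /= -mulr_sumr.
have Y0 : \sum_u \sum_v (L u v * (complex.Im (y 0 u) * complex.Re (y 0 v) -
                complex.Re (y 0 u) * complex.Im (y 0 v))) = 0.
  under eq_bigr => u _ do under eq_bigr => v _ do rewrite mulrBr.
  under eq_bigr => u _ do rewrite sumrB.
  rewrite sumrB exchange_big /=.
  apply/eqP; rewrite subr_eq0; apply/eqP; apply: eq_bigr => u _; apply: eq_bigr => v _.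
  rewrite (@Lsym_entry R _ _ Ls); ring.
have -> : \sum_u \sum_v ((L u v * (complex.Im (y 0 u) * complex.Re (y 0 v) -
                complex.Re (y 0 u) * complex.Im (y 0 v)))%:C)%C = 0.
  under eq_bigr => u _ do rewrite -rmorph_sum.
  by rewrite -rmorph_sum Y0 rmorph0.
rewrite mulr0 addr0 -big_split rmorph_sum; apply: eq_bigr => u _.
rewrite -big_split rmorph_sum; apply: eq_bigr => v _.
rewrite !mxE; congr (real_complex R _) => /=; ring.
Qed.


Lemma reduce_norm (R : realType) m (y : 'rV[R[i]]_m) :
  (y *m y^t*) 0 0 = ((\sum_u (map_mx (@complex.Re R) y) 0 u ^+ 2 +
                       \sum_u (map_mx (@complex.Im R) y) 0 u ^+ 2)%:C)%C.
Proof.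
rewrite mxE -big_split rmorph_sum; apply: eq_bigr => u _.
by rewrite !mxE conjCE norm_id.
Qed.

Lemma trC_mul (R : realType) a b c (A : 'M[R[i]]_(a, b)) (B : 'M[R[i]]_(b, c)) :
  (A *m B)^t* = B^t* *m A^t*.
Proof. by rewrite trmx_mul map_mxM. Qed.

Lemma rayleigh (R : realType) m (P : 'M[R[i]]_m) (d : 'I_m -> R) (LC : 'M[R[i]]_m) :
  P *m P^t* = 1%:M -> P^t* *m P = 1%:M ->
  LC = P^t* *m diag_mx (\row_i ((d i)%:C)%C) *m P ->
  forall y : 'rV[R[i]]_m,
  (y *m LC *m y^t*) 0 0 = \sum_i ((d i)%:C)%C * ((y *m P^t*) 0 i * (((y *m P^t*) 0 i)^*)%C) /\
  (y *m y^t*) 0 0 = \sum_i (y *m P^t*) 0 i * (((y *m P^t*) 0 i)^*)%C.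
Proof.
move=> P1 P2 LE y.
set w := y *m P^t*.
split.
  have -> : y *m LC *m y^t* = w *m diag_mx (\row_i ((d i)%:C)%C) *m w^t*.
    by rewrite LE /w trC_mul trmxCK !mulmxA.
  rewrite mxE; apply: eq_bigr => j _.
  rewrite mul_mx_diag !mxE conjCE; ring.
have -> : y *m y^t* = w *m w^t*.
  by rewrite /w trC_mul trmxCK mulmxA -[y *m P^t* *m P]mulmxA P2 mulmx1.
rewrite mxE; apply: eq_bigr => j _; by rewrite !mxE conjCE.
Qed.

Lemma core_upper (R : realType) m (d : 'I_m -> R) (w : 'rV[R[i]]_m) (s : R) (i1 : 'I_m) :
  w 0 i1 = 0 -> (forall i, i != i1 -> s <= d i) ->
  (s%:C)%C * \sum_i w 0 i * ((w 0 i)^*)%C <= \sum_i ((d i)%:C)%C * (w 0 i * ((w 0 i)^*)%C).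
Proof.
move=> w0 hd; rewrite mulr_sumr; apply: ler_sum => i _.
have [->|ne] := eqVneq i i1.
  by rewrite w0 mul0r !mulr0.
apply: ler_wpM2r; first by rewrite -conjCE mul_conjC_ge0.
by rewrite lecR; apply: hd.
Qed.

Lemma core_lower (R : realType) m (d : 'I_m -> R) (w : 'rV[R[i]]_m) (s : R) :
  (forall i, w 0 i = 0 \/ d i <= s) ->
  \sum_i ((d i)%:C)%C * (w 0 i * ((w 0 i)^*)%C) <= (s%:C)%C * \sum_i w 0 i * ((w 0 i)^*)%C.
Proof.
move=> hd; rewrite mulr_sumr; apply: ler_sum => i _.
have [w0|le] := hd i.
  by rewrite w0 mul0r !mulr0.
apply: ler_wpM2r; first by rewrite -conjCE mul_conjC_ge0.
by rewrite lecR.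
Qed.

Lemma pick_ab (R : realType) (al be : R[i]) :
  exists a b : R[i], ((a != 0) || (b != 0)) /\ a * al + b * be = 0.
Proof.
have [->|ne] := eqVneq al 0.
  by exists 1, 0; rewrite oner_eq0 /= mul0r mulr0 addr0.
exists be, (- al); split; last by ring.
by rewrite oppr_eq0 ne orbT.
Qed.


Lemma cnorm_pos (R : realType) (x : R[i]) :
  x != 0 -> 0 < complex.Re x ^+ 2 + complex.Im x ^+ 2.
Proof.
case: x => a b /= ne; rewrite lt_def addr_ge0 ?sqr_ge0 // andbT.
rewrite paddr_eq0 ?sqr_ge0 // !sqrf_eq0; apply: contra ne => /andP[/eqP-> /eqP->] //.
Qed.

Lemma Re_sum (R : realType) m (F : 'I_m -> R[i]) :
  complex.Re (\sum_i F i) = \sum_i complex.Re (F i).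
Proof.
apply: (big_morph (@complex.Re R)) => //.
by move=> [a b] [c e].
Qed.

Lemma Im_sum (R : realType) m (F : 'I_m -> R[i]) :
  complex.Im (\sum_i F i) = \sum_i complex.Im (F i).
Proof.
apply: (big_morph (@complex.Im R)) => //.
by move=> [a b] [c e].
Qed.

Lemma ReIm_lin (R : realType) (a b : R[i]) (r : R) :
  complex.Re (a * 1 + b * (r%:C)%C) = complex.Re a + complex.Re b * r /\
  complex.Im (a * 1 + b * (r%:C)%C) = complex.Im a + complex.Im b * r.
Proof. by case: a => a1 a2; case: b => b1 b2 /=; split; ring. Qed.

Lemma lap_sym (R : realType) n k (f : 'I_k -> 'I_n * 'I_n) :
  (laplacian R (Dadj f))^T = laplacian R (Dadj f).
Proof.
apply/matrixP => i j; rewrite !mxE (@Dsym n k f j i) eq_sym.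
by case: eqP => [->|]; rewrite ?mul0r.
Qed.


Theorem theorem4p2 (R : realType) (n k : nat) (f : 'I_k -> 'I_n * 'I_n) :
  (1 <= n)%N -> (1 <= k)%N -> (k <= n)%N -> injective f ->
  #|'I_(n + n)| = (2 * n)%N /\
  exists s : seq R,
    sorted_eigenvalues (laplacian R (Dadj f)) s /\
    2 / (3 * (2 * n%:R - 1)) <= s`_1 <= 2 * k%:R / n%:R.
Proof.
move=> n1 k1 kn fi; split; first by rewrite card_ord mul2n addnn.
set L := laplacian R (Dadj f).
have Ls : L^T = L by exact: lap_sym.
have [P [d [P1 [P2 LE]]]] := @real_spectral R _ L Ls.
pose i0 : 'I_(n + n) := lshift n (Ordinal n1).
pose Is := sort (fun i j : 'I_(n + n) => d i <= d j) (index_enum 'I_(n + n)).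
have pe : perm_eq (index_enum 'I_(n + n)) (enum 'I_(n + n)).
  apply: uniq_perm; [exact: index_enum_uniq | exact: enum_uniq |].
  by move=> i; rewrite mem_index_enum mem_enum.
have pIs : perm_eq Is (index_enum 'I_(n + n)) by rewrite /Is perm_sort.
have uIs : uniq Is by rewrite (perm_uniq pIs) index_enum_uniq.
have sIs : size Is = (n + n)%N by rewrite (perm_size pIs) (perm_size pe) size_enum_ord.
have memIs : forall i, i \in Is by move=> i; rewrite (perm_mem pIs) mem_index_enum.
have srt : sorted <=%R (map d Is).
  by rewrite sorted_map; apply: sort_sorted => i j; exact: le_total.
have nth_s : forall t, (t < n + n)%N -> (map d Is)`_t = d (nth i0 Is t).
  by move=> t ht; rewrite (nth_map i0) // sIs.
have N2 : (1 < n + n)%N by apply: (leq_add n1 n1).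
have hom := sorted_leq_nth le_trans lexx 0 srt.
have hle : forall t1 t2, (t1 <= t2 < n + n)%N -> d (nth i0 Is t1) <= d (nth i0 Is t2).
  move=> t1 t2 /andP[h12 h2]; rewrite -!nth_s //; last by apply: leq_ltn_trans h2.
  by apply: hom; rewrite // inE size_map sIs //; apply: leq_ltn_trans h2.
exists (map d Is); split.
  split => //.
  rewrite (@char_poly_real R _ L P d P2 LE) big_map.
  by apply: perm_big; rewrite perm_sym.
rewrite nth_s //.
set s1 := d (nth i0 Is 1).
set LC := map_mx (real_complex R) L.
set ii := nth i0 Is 0.
have ii_le : forall i, i != ii -> s1 <= d i.
  move=> i ne.
  have hi : i \in Is := memIs i.
  have t_lt : (index i Is < n + n)%N by move: hi; rewrite -index_mem sIs.
  rewrite -(nth_index i0 hi); apply: hle; rewrite t_lt andbT lt0n.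
  apply: contra ne => /eqP h0; rewrite /ii -h0 nth_index //.
apply/andP; split.
  set jj := nth i0 Is 1.
  have ij : ii != jj by rewrite /ii /jj nth_uniq // sIs // ltnW.
  have dii : d ii <= s1 by apply: hle; rewrite N2 andbT.
  pose dl := fun i : 'I_(n + n) => (delta_mx 0 i : 'rV[R[i]]_(n + n)).
  have [a [b [ab0 hab]]] := @pick_ab R (\sum_u (dl ii *m P) 0 u) (\sum_u (dl jj *m P) 0 u).
  set w := a *: dl ii + b *: dl jj.
  set y := w *m P.
  have hw : y *m P^t* = w by rewrite /y -mulmxA P1 mulmx1.
  have ysum : \sum_u y 0 u = 0.
    rewrite -[RHS]hab /y /w mulmxDl -!scalemxAl.
    rewrite !mulr_sumr -big_split /=; apply: eq_bigr => u _; by rewrite !mxE.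
  have [Qy Ny] := @rayleigh R _ P d _ P1 P2 LE y.
  rewrite hw in Qy Ny.
  have e1 : (ii == jj) = false := negbTE ij.
  have e2 : (jj == ii) = false by rewrite eq_sym.
  have wii : w 0 ii = a by rewrite /w /dl !mxE /= ?eqxx ?e1 ?e2 /=; ring.
  have wjj : w 0 jj = b by rewrite /w /dl !mxE /= ?eqxx ?e1 ?e2 /=; ring.
  have Hc : (y *m LC *m y^t*) 0 0 <= ((s1%:C)%C) * (y *m y^t*) 0 0.
    rewrite Qy Ny; apply: core_lower => t.
    have [->|nt] := eqVneq t ii; first by right.
    have [->|nt2] := eqVneq t jj; first by right.
    have e3 : (t == ii) = false := negbTE nt.
    have e4 : (t == jj) = false := negbTE nt2.
    left; rewrite /w /dl !mxE /= ?e3 ?e4 /=; ring.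
  have Npos : 0 < (y *m y^t*) 0 0.
    rewrite Ny.
    have [t wt] : exists t, w 0 t != 0.
      case/orP: ab0 => h; [exists ii; rewrite wii // | exists jj; rewrite wjj //].
    have tpos : 0 < w 0 t * ((w 0 t)^*)%C.
      by rewrite norm_id (ltcR 0) cnorm_pos.
    rewrite (bigD1 t) //=; apply: (lt_le_trans tpos); rewrite lerDl.
    by apply: sumr_ge0 => u _; rewrite -conjCE mul_conjC_ge0.
  rewrite (@reduce R _ L Ls y) -/LC in Hc.
  rewrite reduce_norm in Hc Npos.
  rewrite -rmorphM lecR in Hc.
  rewrite (ltcR 0) in Npos.
  set p := map_mx (@complex.Re R) y in Hc Npos.
  set q := map_mx (@complex.Im R) y in Hc Npos.
  have hp : \sum_u p 0 u = 0.
    by under eq_bigr => u _ do rewrite mxE; rewrite -Re_sum ysum.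
  have hq : \sum_u q 0 u = 0.
    by under eq_bigr => u _ do rewrite mxE; rewrite -Im_sum ysum.
  have lp := @lower_qf R n k f n1 k1 p hp.
  have lq := @lower_qf R n k f n1 k1 q hq.
  rewrite -(ler_pM2r Npos) mulrDr.
  apply: le_trans (le_trans (lerD lp lq) Hc); rewrite mulrC.
  by rewrite le_eqVlt eqxx.
pose oneC : 'rV[R[i]]_(n + n) := const_mx 1.
pose xC : 'rV[R[i]]_(n + n) := \row_u ((side R u)%:C)%C.
have [a [b [ab0 hab]]] := @pick_ab R ((oneC *m P^t*) 0 ii) ((xC *m P^t*) 0 ii).
set y := a *: oneC + b *: xC.
have w0 : (y *m P^t*) 0 ii = 0.
  by rewrite -hab /y mulmxDl -!scalemxAl !mxE.
have [Qy Ny] := @rayleigh R _ P d _ P1 P2 LE y.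
have Hc : ((s1%:C)%C) * (y *m y^t*) 0 0 <= (y *m LC *m y^t*) 0 0.
  by rewrite Qy Ny; apply: (@core_upper R _ d _ s1 ii w0 ii_le).
rewrite (@reduce R _ L Ls y) -/LC reduce_norm in Hc.
rewrite -rmorphM lecR in Hc.
have yE : forall u, y 0 u = a * 1 + b * ((side R u)%:C)%C by move=> u; rewrite !mxE.
have hpE : forall u, (map_mx (@complex.Re R) y) 0 u = complex.Re a + complex.Re b * side R u.
  by move=> u; rewrite mxE yE; case: (@ReIm_lin R a b (side R u)).
have hqE : forall u, (map_mx (@complex.Im R) y) 0 u = complex.Im a + complex.Im b * side R u.
  by move=> u; rewrite mxE yE; case: (@ReIm_lin R a b (side R u)).
have [hp1 hp2] := @span_vec R n k f fi (complex.Re a) (complex.Re b) _ hpE.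
have [hq1 hq2] := @span_vec R n k f fi (complex.Im a) (complex.Im b) _ hqE.
rewrite hp1 hp2 hq1 hq2 in Hc.
set A := complex.Re a ^+ 2 + complex.Im a ^+ 2.
set B := complex.Re b ^+ 2 + complex.Im b ^+ 2.
have A0 : 0 <= A by rewrite /A addr_ge0 ?sqr_ge0.
have B0 : 0 <= B by rewrite /B addr_ge0 ?sqr_ge0.
have AB : 0 < A + B.
  case/orP: ab0 => h.
    by apply: (lt_le_trans (@cnorm_pos R a h)); rewrite lerDl.
  by apply: (lt_le_trans (@cnorm_pos R b h)); rewrite lerDr.
have n0 : 0 < n%:R :> R by rewrite ltr0n.
have k0 : 0 <= k%:R :> R by rewrite ler0n.
have H1 : s1 * (2 * n%:R * (A + B)) <= 4 * k%:R * B.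
  have -> : 4 * k%:R * B = complex.Re b ^+ 2 * (4 * k%:R) + complex.Im b ^+ 2 * (4 * k%:R).
    by rewrite /B; ring.
  have -> : s1 * (2 * n%:R * (A + B)) = s1 * (2 * n%:R * (complex.Re a ^+ 2 + complex.Re b ^+ 2) +
        2 * n%:R * (complex.Im a ^+ 2 + complex.Im b ^+ 2)) by rewrite /A /B; ring.
  exact: Hc.
have H2 : 4 * k%:R * B <= 4 * k%:R * (A + B).
  by apply: ler_wpM2l; [apply: mulr_ge0 | rewrite lerDr].
rewrite ler_pdivlMr //.
have H3 : (s1 * n%:R) * (2 * (A + B)) <= (2 * k%:R) * (2 * (A + B)).
  have -> : (s1 * n%:R) * (2 * (A + B)) = s1 * (2 * n%:R * (A + B)) by ring.
  have -> : (2 * k%:R) * (2 * (A + B)) = 4 * k%:R * (A + B) by ring.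
  exact: le_trans H1 H2.
by rewrite -(ler_pM2r (_ : 0 < 2 * (A + B))) // mulr_gt0.
Qed.
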